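(* Let $\rho>0$, $T>0$, $\theta=1/4$, $x,y\in\mathbb{R}$, and let $X^*_t=\frac12(x+y)V_t+\frac12(x-y)W_t$, $Y^*_t=\frac12(x+y)V_t-\frac12(x-y)W_t$ with $V,W$ as in the context. Then $$\mathscr C(X^*|Y^* )=\frac{(x+y)^2\big(36e^{6\rho T}(8\rho T+13)-60e^{3\rho T}-3\big)}{16\big(2e^{3\rho T}(3\rho T+5)-1\big)^2}+\frac{x^2-y^2}{2(\rho T+1)}+\frac{(x-y)^2}{16(\rho T+1)^2}.$$
   Context: $V_{0-}=1$, $V_t=\frac{e^{3\rho T}(6\rho(T-t)+4)-4e^{3\rho t}}{2e^{3\rho T}(3\rho T+5)-1}$ for $t\in[0,T]$; $W_{0-}=1$, $W_t=\frac{\rho(T-t)+1}{\rho T+1}$ for $t\in[0,T)$, $W_T=0$; both vanish for $t>T$. For deterministic right-continuous strategies $X,Y$ of bounded variation on $[0,T]$ with given values at $0-$ (so that $dX$ charges the jump $\Delta X_0=X_0-X_{0-}$), the liquidation costs are $$\mathscr C(X|Y)=\frac12\int_{[0,T]}\int_{[0,T]}e^{-\rho|t-s|}\,dX_s\,dX_t+\int_{[0,T]}\int_{[0,t)}e^{-\rho(t-s)}\,dY_s\,dX_t+\frac12\sum_{t\in[0,T]}\Delta X_t\Delta Y_t+\theta\sum_{t\in[0,T]}(\Delta X_t)^2.$$ *)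

(* Defs.v *)
From Stdlib Require Import Reals Lra List.
From Coquelicot Require Import Coquelicot.
Open Scope R_scope.

(* The strategies V and W of the context, on t >= 0 (they vanish for t > T);
   their values at 0- are V0m = W0m = 1. *)
Definition V0m : R := 1.
Definition W0m : R := 1.
Definition Vf (rho T t : R) : R :=
  if Rle_dec t T then
    (exp (3*rho*T) * (6*rho*(T - t) + 4) - 4 * exp (3*rho*t))
      / (2 * exp (3*rho*T) * (3*rho*T + 5) - 1)
  else 0.
Definition Wf (rho T t : R) : R :=
  if Rlt_dec t T then (rho*(T - t) + 1) / (rho*T + 1) else 0.

(* A description of the signed measure dX on [0,T] of a strategy of the form
   "finitely many jumps + absolutely continuous part with continuous density":
   dX = sum_i a_i delta_{t_i} + dens(s) ds. *)
Record rep := { jumps : list (R * R) ; dens : R -> R }.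

Definition lsum (l : list R) : R := fold_right Rplus 0 l.

Definition mu_int (T : R) (r : rep) (h : R -> R) : R :=
  lsum (map (fun p => snd p * h (fst p)) (jumps r))
  + RInt (fun s => dens r s * h s) 0 T.

Definition mu_int_lt (r : rep) (t : R) (h : R -> R) : R :=
  lsum (map (fun p => if Rlt_dec (fst p) t then snd p * h (fst p) else 0) (jumps r))
  + RInt (fun s => dens r s * h s) 0 t.

Definition jump_at (r : rep) (t : R) : R :=
  lsum (map (fun p => if Req_EM_T (fst p) t then snd p else 0) (jumps r)).

Definition is_rep (T X0m : R) (X : R -> R) (r : rep) : Prop :=
  NoDup (map fst (jumps r)) /\
  (forall p, In p (jumps r) -> 0 <= fst p <= T) /\
  (forall t, 0 <= t <= T -> continuous (dens r) t) /\
  (forall t, 0 <= t <= T ->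
     X t = X0m
           + lsum (map (fun p => if Rle_dec (fst p) t then snd p else 0) (jumps r))
           + RInt (dens r) 0 t).

Definition cost (rho theta T : R) (rX rY : rep) : R :=
  1/2 * mu_int T rX (fun t => mu_int T rX (fun s => exp (- rho * Rabs (t - s))))
  + mu_int T rX (fun t => mu_int_lt rY t (fun s => exp (- rho * (t - s))))
  + 1/2 * lsum (map (fun p => snd p * jump_at rY (fst p)) (jumps rX))
  + theta * lsum (map (fun p => (snd p)^2) (jumps rX)).

(* Main.v *)
Require Import Defs.
From Stdlib Require Import Reals Lra List FunctionalExtensionality.
From Coquelicot Require Import Coquelicot.
Open Scope R_scope.

Lemma lsum_minus {A} (L : list A) f g :
  lsum (map f L) - lsum (map g L) = lsum (map (fun p => f p - g p) L).
Proof. induction L; simpl; lra. Qed.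

Lemma lsum_ext_in {A} (L : list A) f g :
  (forall p, In p L -> f p = g p) -> lsum (map f L) = lsum (map g L).
Proof. intro H. f_equal. apply map_ext_in. exact H. Qed.

Lemma sum_single (S : list R) t c (g : R -> R) :
  NoDup S -> In t S ->
  lsum (map (fun s => (if Req_EM_T t s then c else 0) * g s) S) = c * g t.
Proof.
  induction S as [|s S IH]; intros ND Hin; [destruct Hin|].
  inversion ND as [|? ? Hn ND']; subst. simpl.
  destruct Hin as [Heq|Hin].
  - subst s. destruct (Req_EM_T t t) as [_|n]; [|congruence].
    rewrite (lsum_ext_in _ _ (fun _ => 0)).
    + clear. induction S; simpl; lra.
    + intros p Hp. destruct (Req_EM_T t p); [subst; contradiction|lra].
  - destruct (Req_EM_T t s) as [->|_]; [contradiction|].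
    rewrite IH; auto. lra.
Qed.

Lemma sum_jump (L : list (R*R)) (S : list R) (g : R -> R) :
  NoDup S -> (forall p, In p L -> In (fst p) S) ->
  lsum (map (fun p => snd p * g (fst p)) L) =
  lsum (map (fun s => jump_at {| jumps := L; dens := fun _ => 0 |} s * g s) S).
Proof.
  intros ND. induction L as [|p L IH]; intro Hin; simpl.
  - unfold jump_at; simpl. clear. induction S; simpl; lra.
  - unfold jump_at in *; simpl in *.
    rewrite (lsum_ext_in S _ (fun s => (if Req_EM_T (fst p) s then snd p else 0) * g s
        + lsum (map (fun q => if Req_EM_T (fst q) s then snd q else 0) L) * g s)).
    2:{ intros; ring. }
    assert (Hs : forall (f1 f2 : R -> R) (S : list R),
      lsum (map (fun s => f1 s + f2 s) S) = lsum (map f1 S) + lsum (map f2 S)).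
    { clear. intros f1 f2 S; induction S; simpl; lra. }
    rewrite Hs, sum_single; auto. rewrite IH; auto.
Qed.

Lemma jump_at_jumps r t : jump_at r t = jump_at {| jumps := jumps r; dens := fun _ => 0 |} t.
Proof. reflexivity. Qed.

Lemma sum_congr (L1 L2 : list (R*R)) (T : R) (g : R -> R) :
  (forall p, In p L1 -> 0 <= fst p <= T) ->
  (forall p, In p L2 -> 0 <= fst p <= T) ->
  (forall t, 0 <= t <= T -> jump_at {| jumps := L1; dens := fun _ => 0 |} t
                           = jump_at {| jumps := L2; dens := fun _ => 0 |} t) ->
  lsum (map (fun p => snd p * g (fst p)) L1) = lsum (map (fun p => snd p * g (fst p)) L2).
Proof.
  intros H1 H2 HJ.
  set (S := nodup Req_EM_T (map fst L1 ++ map fst L2)).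
  assert (ND : NoDup S) by apply NoDup_nodup.
  rewrite (sum_jump L1 S), (sum_jump L2 S); auto.
  - apply lsum_ext_in. intros s Hs. unfold S in Hs. rewrite nodup_In, in_app_iff in Hs.
    rewrite HJ; auto. destruct Hs as [Hs|Hs]; apply in_map_iff in Hs as [p [<- Hp]]; auto.
  - intros p Hp. unfold S. rewrite nodup_In, in_app_iff. right. apply in_map; auto.
  - intros p Hp. unfold S. rewrite nodup_In, in_app_iff. left. apply in_map; auto.
Qed.

Lemma jump_at_self (L : list (R*R)) p :
  NoDup (map fst L) -> In p L -> jump_at {| jumps := L; dens := fun _ => 0 |} (fst p) = snd p.
Proof.
  unfold jump_at; simpl. induction L as [|q L IH]; intros ND Hin; [destruct Hin|].
  simpl in ND. inversion ND as [|? ? Hn ND']; subst. simpl.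
  destruct Hin as [Heq|Hin].
  - subst p. destruct (Req_EM_T (fst q) (fst q)); [|congruence].
    rewrite (lsum_ext_in _ _ (fun _ => 0)).
    + clear. induction L; simpl; lra.
    + intros p Hp. destruct (Req_EM_T (fst p) (fst q)) as [eq|]; [|lra].
      exfalso. apply Hn. rewrite <- eq. apply in_map; auto.
  - rewrite IH; auto. destruct (Req_EM_T (fst q) (fst p)) as [eq|]; [|lra].
    exfalso. apply Hn. rewrite eq. apply in_map; auto.
Qed.

Lemma free_interval (E : list R) a b : a < b ->
  exists c e, a <= c /\ c < e /\ e <= b /\ forall z, In z E -> ~ (c < z < e).
Proof.
  revert a b. induction E as [|z0 E IH]; intros a b Hab.
  - exists a, b. repeat split; try lra. intros z [].
  - destruct (IH a b Hab) as [c [e [H1 [H2 [H3 H4]]]]].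
    destruct (Rle_dec z0 ((c+e)/2)).
    + exists ((c+e)/2), e. repeat split; try lra.
      intros z [<-|Hz]; [lra|]. specialize (H4 z Hz). lra.
    + exists c, ((c+e)/2). repeat split; try lra.
      intros z [<-|Hz]; [lra|]. specialize (H4 z Hz). lra.
Qed.

Lemma left_free (E : list R) a t : a < t ->
  exists s, a <= s < t /\ forall z, In z E -> ~ (s < z < t).
Proof.
  induction E as [|z0 E IH]; intros Hat.
  - exists a. split; [lra|]. intros z [].
  - destruct (IH Hat) as [s [H1 H2]].
    destruct (Rlt_dec s z0); [destruct (Rlt_dec z0 t)|].
    + exists z0. split; [lra|]. intros z [<-|Hz]; [lra|]. specialize (H2 z Hz). lra.
    + exists s. split; [lra|]. intros z [<-|Hz]; [lra|]. auto.
    + exists s. split; [lra|]. intros z [<-|Hz]; [lra|]. auto.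
Qed.

Definition Gs (r : rep) (t : R) : R :=
  lsum (map (fun p => if Rle_dec (fst p) t then snd p else 0) (jumps r)).

Lemma Gs_const r c e u v :
  (forall z, In z (map fst (jumps r)) -> ~ (c < z < e)) ->
  c < u < e -> c < v < e -> Gs r u = Gs r v.
Proof.
  intros H Hu Hv. unfold Gs. apply lsum_ext_in. intros p Hp.
  assert (Hz := H (fst p) (in_map _ _ _ Hp)).
  destruct (Rle_dec (fst p) u); destruct (Rle_dec (fst p) v); auto; exfalso; lra.
Qed.

Lemma rep_eq T X0m X r t : is_rep T X0m X r -> 0 <= t <= T ->
  X t = X0m + Gs r t + RInt (dens r) 0 t.
Proof. intros [_ [_ [_ H]]] Ht. apply H; auto. Qed.

Lemma is_derive_int T X0m X r m : is_rep T X0m X r -> 0 < m < T ->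
  is_derive (RInt (dens r) 0) m (dens r m).
Proof.
  intros Hr Hm. destruct Hr as [_ [_ [Hc _]]].
  apply (is_derive_RInt (dens r) (RInt (dens r) 0) 0 m).
  - apply (locally_interval _ m 0 T); simpl; try lra.
    intros y Hy1 Hy2. apply (RInt_correct (dens r) 0 y). apply ex_RInt_continuous.
    intros z Hz. apply Hc. rewrite Rmin_left in Hz by lra. rewrite Rmax_right in Hz by lra. lra.
  - apply Hc. lra.
Qed.

Lemma dens_eq_free T X0m X r r0 c e m :
  is_rep T X0m X r -> is_rep T X0m X r0 -> 0 <= c -> c < m < e -> e <= T ->
  (forall z, In z (map fst (jumps r) ++ map fst (jumps r0)) -> ~ (c < z < e)) ->
  dens r m = dens r0 m.
Proof.
  intros Hr Hr0 Hc Hm He Hf.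
  assert (D := is_derive_minus _ _ _ _ _ (is_derive_int T X0m X r m Hr ltac:(lra))
                 (is_derive_int T X0m X r0 m Hr0 ltac:(lra))).
  set (C := Gs r0 m - Gs r m).
  assert (D2 : is_derive (fun z : R => minus (RInt (dens r) 0 z) (RInt (dens r0) 0 z)) m zero).
  { apply (is_derive_ext_loc (fun _ => C)).
    - apply (locally_interval _ m c e); simpl; try lra.
      intros y Hy1 Hy2.
      assert (E1 := rep_eq T X0m X r y Hr ltac:(lra)).
      assert (E2 := rep_eq T X0m X r0 y Hr0 ltac:(lra)).
      rewrite (Gs_const r c e y m) in E1; try lra.
      2:{ intros z Hz. apply Hf. apply in_or_app; auto. }
      rewrite (Gs_const r0 c e y m) in E2; try lra.
      2:{ intros z Hz. apply Hf. apply in_or_app; auto. }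
      unfold C, minus, plus, opp; simpl. lra.
    - apply is_derive_const. }
  pose proof (eq_trans (eq_sym (is_derive_unique _ _ _ D)) (is_derive_unique _ _ _ D2)) as U.
  revert U. unfold minus, plus, opp, zero; simpl. intros. lra.
Qed.

Lemma dens_eq T X0m X r r0 : 0 < T ->
  is_rep T X0m X r -> is_rep T X0m X r0 -> forall t, 0 <= t <= T -> dens r t = dens r0 t.
Proof.
  intros HT Hr Hr0 t Ht.
  set (f := fun s => dens r s - dens r0 s).
  assert (Hcont : continuity_pt f t).
  { unfold f. apply (continuity_pt_minus (dens r) (dens r0)).
    - apply continuity_pt_filterlim. destruct Hr as [_ [_ [Hc _]]]. apply Hc; auto.
    - apply continuity_pt_filterlim. destruct Hr0 as [_ [_ [Hc _]]]. apply Hc; auto. }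
  destruct (Req_dec (f t) 0) as [H0|H0]; [unfold f in H0; lra|exfalso].
  destruct (Hcont (Rabs (f t)) ltac:(apply Rabs_pos_lt; auto)) as [alp [Halp Hcz]].
  set (a' := Rmax 0 (t - alp/2)). set (b' := Rmin T (t + alp/2)).
  assert (Hab : a' < b').
  { unfold a', b'. unfold Rmax, Rmin. destruct (Rle_dec 0 (t - alp/2)), (Rle_dec T (t+alp/2)); lra. }
  destruct (free_interval (t :: map fst (jumps r) ++ map fst (jumps r0)) a' b' Hab)
    as [c [e [H1 [H2 [H3 H4]]]]].
  set (m := (c+e)/2).
  assert (Ha0 : 0 <= a') by apply Rmax_l. assert (HbT : b' <= T) by apply Rmin_l.
  assert (Ha1 : t - alp/2 <= a') by apply Rmax_r. assert (Hb1 : b' <= t + alp/2) by apply Rmin_r.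
  assert (Hm : dens r m = dens r0 m).
  { apply (dens_eq_free T X0m X r r0 c e m); auto; try (unfold m; lra).
    intros z Hz. apply H4. right. auto. }
  assert (Hmt : m <> t). { intro Heq. apply (H4 t); [left; auto|]. unfold m in Heq. lra. }
  specialize (Hcz m). simpl in Hcz. unfold R_dist, D_x, no_cond in Hcz.
  assert (Hlt : Rabs (f m - f t) < Rabs (f t)).
  { apply Hcz. split; [split; auto|]. unfold m. apply Rabs_def1; lra. }
  unfold f at 1 in Hlt. rewrite Hm in Hlt. replace (dens r0 m - dens r0 m - f t) with (- f t) in Hlt by ring.
  rewrite Rabs_Ropp in Hlt. lra.
Qed.

Lemma Gs_eq T X0m X r r0 : 0 < T ->
  is_rep T X0m X r -> is_rep T X0m X r0 -> forall t, 0 <= t <= T -> Gs r t = Gs r0 t.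
Proof.
  intros HT Hr Hr0 t Ht.
  assert (E1 := rep_eq T X0m X r t Hr Ht). assert (E2 := rep_eq T X0m X r0 t Hr0 Ht).
  assert (RInt (dens r) 0 t = RInt (dens r0) 0 t).
  { apply RInt_ext. intros z Hz. rewrite Rmin_left in Hz by lra. rewrite Rmax_right in Hz by lra.
    apply (dens_eq T X0m X r r0); auto; lra. }
  lra.
Qed.

Lemma jump_Gs0 T X0m X r : is_rep T X0m X r -> jump_at r 0 = Gs r 0.
Proof.
  intros [_ [Hin _]]. unfold jump_at, Gs. apply lsum_ext_in. intros p Hp.
  specialize (Hin p Hp).
  destruct (Req_EM_T (fst p) 0); destruct (Rle_dec (fst p) 0); auto; exfalso; lra.
Qed.

Lemma jump_Gs r s t : s < t -> (forall z, In z (map fst (jumps r)) -> ~ (s < z < t)) ->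
  jump_at r t = Gs r t - Gs r s.
Proof.
  intros Hst H. unfold Gs. rewrite lsum_minus. unfold jump_at. apply lsum_ext_in.
  intros p Hp. assert (Hz := H (fst p) (in_map _ _ _ Hp)).
  destruct (Req_EM_T (fst p) t); destruct (Rle_dec (fst p) t); destruct (Rle_dec (fst p) s);
    try lra; exfalso; lra.
Qed.

Lemma jump_eq T X0m X r r0 : 0 < T ->
  is_rep T X0m X r -> is_rep T X0m X r0 -> forall t, 0 <= t <= T -> jump_at r t = jump_at r0 t.
Proof.
  intros HT Hr Hr0 t Ht.
  destruct (Req_dec t 0) as [->|Ht0].
  - rewrite (jump_Gs0 T X0m X r Hr), (jump_Gs0 T X0m X r0 Hr0).
    apply (Gs_eq T X0m X); auto; lra.
  - destruct (left_free (map fst (jumps r) ++ map fst (jumps r0)) 0 t ltac:(lra)) as [s [Hs Hf]].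
    rewrite (jump_Gs r s t), (jump_Gs r0 s t); try lra.
    + rewrite !(Gs_eq T X0m X r r0); auto; lra.
    + intros z Hz. apply Hf. apply in_or_app; auto.
    + intros z Hz. apply Hf. apply in_or_app; auto.
Qed.

Lemma jsum_congr T X0m X r r0 (g : R -> R) : 0 < T ->
  is_rep T X0m X r -> is_rep T X0m X r0 ->
  lsum (map (fun p => snd p * g (fst p)) (jumps r)) =
  lsum (map (fun p => snd p * g (fst p)) (jumps r0)).
Proof.
  intros HT Hr Hr0. apply (sum_congr _ _ T).
  - destruct Hr as [_ [H _]]; auto.
  - destruct Hr0 as [_ [H _]]; auto.
  - intros t Ht. rewrite <- !jump_at_jumps. apply (jump_eq T X0m X); auto.
Qed.

Lemma mu_int_congr T X0m X r r0 h h' : 0 < T ->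
  is_rep T X0m X r -> is_rep T X0m X r0 ->
  (forall t, 0 <= t <= T -> h t = h' t) -> mu_int T r h = mu_int T r0 h'.
Proof.
  intros HT Hr Hr0 Hh. unfold mu_int. f_equal.
  - rewrite (lsum_ext_in _ _ (fun p => snd p * h' (fst p))).
    + apply (jsum_congr T X0m X); auto.
    + intros p Hp. rewrite Hh; auto. destruct Hr as [_ [H _]]; auto.
  - apply RInt_ext. intros z Hz. rewrite Rmin_left in Hz by lra. rewrite Rmax_right in Hz by lra.
    rewrite (dens_eq T X0m X r r0), Hh; auto; lra.
Qed.

Lemma mu_int_lt_congr T X0m X r r0 t h : 0 < T -> 0 <= t <= T ->
  is_rep T X0m X r -> is_rep T X0m X r0 -> mu_int_lt r t h = mu_int_lt r0 t h.
Proof.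
  intros HT Ht Hr Hr0. unfold mu_int_lt. f_equal.
  - assert (E : forall L, lsum (map (fun p : R*R => if Rlt_dec (fst p) t then snd p * h (fst p) else 0) L)
       = lsum (map (fun p => snd p * (fun s => if Rlt_dec s t then h s else 0) (fst p)) L)).
    { intro L. apply lsum_ext_in. intros p _. simpl. destruct (Rlt_dec (fst p) t); ring. }
    rewrite !E. apply (jsum_congr T X0m X _ _ (fun s => if Rlt_dec s t then h s else 0)); auto.
  - apply RInt_ext. intros z Hz. rewrite Rmin_left in Hz by lra. rewrite Rmax_right in Hz by lra.
    rewrite (dens_eq T X0m X r r0); auto; lra.
Qed.

Lemma cost_congr rho th T X0m X Y0m Y rX rX0 rY rY0 : 0 < T ->
  is_rep T X0m X rX -> is_rep T X0m X rX0 -> is_rep T Y0m Y rY -> is_rep T Y0m Y rY0 ->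
  cost rho th T rX rY = cost rho th T rX0 rY0.
Proof.
  intros HT HX HX0 HY HY0. unfold cost.
  assert (HXt : forall p, In p (jumps rX) -> 0 <= fst p <= T) by (destruct HX as [_ [H _]]; auto).
  assert (HXt0 : forall p, In p (jumps rX0) -> 0 <= fst p <= T) by (destruct HX0 as [_ [H _]]; auto).
  f_equal; [f_equal; [f_equal|] |].
  - f_equal. apply (mu_int_congr T X0m X); auto. intros t Ht.
    apply (mu_int_congr T X0m X); auto.
  - apply (mu_int_congr T X0m X); auto. intros t Ht.
    apply (mu_int_lt_congr T Y0m Y); auto.
  - f_equal. rewrite (lsum_ext_in _ _ (fun p => snd p * jump_at rY0 (fst p))).
    + apply (jsum_congr T X0m X); auto.
    + intros p Hp. rewrite (jump_eq T Y0m Y rY rY0); auto.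
  - f_equal.
    assert (E : forall r, is_rep T X0m X r -> lsum (map (fun p => snd p ^ 2) (jumps r)) =
                 lsum (map (fun p => snd p * jump_at rX0 (fst p)) (jumps r))).
    { intros r Hr. apply lsum_ext_in. intros p Hp.
      rewrite <- (jump_eq T X0m X r rX0); auto.
      2:{ destruct Hr as [_ [H _]]; auto. }
      rewrite jump_at_jumps, jump_at_self; [ring| |auto]. destruct Hr as [H _]; auto. }
    rewrite (E rX HX), (E rX0 HX0). apply (jsum_congr T X0m X); auto.
Qed.

Definition densf P Q k s := P + Q * exp (k*s) ^ 3.
Definition rep2 c0 cT P Q k T :=
  {| jumps := (0,c0) :: (T,cT) :: nil; dens := densf P Q k |}.

Lemma exp_sub a b : exp (a - b) = exp a / exp b.
Proof. unfold Rminus, Rdiv. rewrite exp_plus, exp_Ropp. reflexivity. Qed.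

Lemma exp3 r t : exp (3*r*t) = exp (r*t) ^ 3.
Proof. replace (3*r*t) with (r*t + (r*t + r*t)) by ring. rewrite !exp_plus. ring. Qed.

Ltac req := match goal with |- ?a = ?b => change (@eq R a b) end.

Lemma RInt_by (F f g : R -> R) a b v : a <= b ->
  (forall x, a <= x <= b -> is_derive F x (f x)) ->
  (forall x, a <= x <= b -> continuous f x) ->
  (forall x, a < x < b -> f x = g x) -> v = F b - F a -> is_RInt g a b v.
Proof.
  intros Hab Hd Hc He ->. apply (is_RInt_ext f).
  - intros x Hx. rewrite Rmin_left in Hx by lra. rewrite Rmax_right in Hx by lra. auto.
  - assert (H := is_RInt_derive F f a b).
    rewrite Rmin_left in H by lra. rewrite Rmax_right in H by lra. apply H; auto.
Qed.

Lemma cont_of_der (f : R -> R) x : ex_derive f x -> continuous f x.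
Proof. intro H. apply continuity_pt_filterlim. apply derivable_continuous_pt.
  apply ex_derive_Reals_0. exact H. Qed.

Ltac nz := repeat match goal with
  | |- _ /\ _ => split | |- True => exact I
  | |- _ * _ <> 0 => apply Rmult_integral_contrapositive_currified
  | |- exp _ <> 0 => apply Rgt_not_eq, exp_pos
  | |- _ <> 0 => apply Rgt_not_eq end; try lra.

Ltac cont_tac := intros; apply cont_of_der; auto_derive; auto.

Definition gform c0 cT P Q k u v :=
  c0/v + cT*v/u + (P*(v-1)/k + Q*(v^4-1)/(4*k))/v + v*(P*(1/v-1/u)/k + Q*(u^2-v^2)/(2*k)).

Lemma inner1 c0 cT P Q k T t : 0 < k -> 0 < T -> 0 <= t <= T ->
  mu_int T (rep2 c0 cT P Q k T) (fun s => exp (- k * Rabs (t - s))) =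
  gform c0 cT P Q k (exp (k*T)) (exp (k*t)).
Proof.
  intros Hk HT Ht. unfold mu_int, rep2; simpl.
  pose proof (exp_pos (k*t)) as Hv. pose proof (exp_pos (k*T)) as Hu.
  assert (I1 : is_RInt (fun s => densf P Q k s * exp (- k * Rabs (t - s))) 0 t
      ((P*exp (k*t)/k + Q*exp (k*t)^4/(4*k))/exp (k*t) - (P*exp (k*0)/k + Q*exp (k*0)^4/(4*k))/exp (k*t))).
  { apply (RInt_by (fun s => (P*exp (k*s)/k + Q*exp (k*s)^4/(4*k))/exp (k*t))
                   (fun s => (P + Q*exp (k*s)^3) * exp (k*s) / exp (k*t))); try lra.
    - intros s _. auto_derive; auto. req. field. lra.
    - cont_tac.
    - intros s Hs. rewrite Rabs_right by lra. replace (-k*(t-s)) with (k*s - k*t) by ring.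
      rewrite exp_sub. unfold densf. field. lra. }
  assert (I2 : is_RInt (fun s => densf P Q k s * exp (- k * Rabs (t - s))) t T
      (exp (k*t) * (-P/(k*exp (k*T)) + Q*exp (k*T)^2/(2*k)) - exp (k*t) * (-P/(k*exp (k*t)) + Q*exp (k*t)^2/(2*k)))).
  { apply (RInt_by (fun s => exp (k*t) * (-P/(k*exp (k*s)) + Q*exp (k*s)^2/(2*k)))
                   (fun s => (P + Q*exp (k*s)^3) * exp (k*t) / exp (k*s))); try lra.
    - intros s _. pose proof (exp_pos (k*s)). auto_derive; [nz|]. req. field. nz.
    - intros s _. pose proof (exp_pos (k*s)). apply cont_of_der; auto_derive; nz.
    - intros s Hs. rewrite Rabs_left by lra. replace (-k*-(t-s)) with (k*t - k*s) by ring.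
      rewrite exp_sub. unfold densf. field. apply Rgt_not_eq, exp_pos. }
  rewrite (is_RInt_unique _ _ _ _ (is_RInt_Chasles _ _ _ _ _ _ I1 I2)).
  rewrite Rminus_0_r, Rabs_right by lra.
  rewrite Rabs_left1 by lra.
  replace (-k*t) with (k*0 - k*t) by ring. replace (-k*-(t-T)) with (k*t - k*T) by ring.
  rewrite !exp_sub. rewrite Rmult_0_r, exp_0.
  unfold gform, plus; simpl. field. lra.
Qed.

Lemma mu_int_rep2 c0 cT P Q k T h :
  mu_int T (rep2 c0 cT P Q k T) h = c0 * h 0 + cT * h T + RInt (fun s => densf P Q k s * h s) 0 T.
Proof. unfold mu_int, rep2; simpl. ring. Qed.

Definition A0 P k := 2*P/k.
Definition Am c0 P Q k := c0 - P/k - Q/(4*k).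
Definition A1 cT P Q k u := cT/u - P/(k*u) + Q*u^2/(2*k).
Definition A3 Q k := -Q/(4*k).
Definition F1 c0 cT P Q k u t v :=
  P*A0 P k*t + P*A1 cT P Q k u*v/k - P*Am c0 P Q k/(k*v) + (P*A3 Q k+Q*A0 P k)*v^3/(3*k)
  + Q*A1 cT P Q k u*v^4/(4*k) + Q*Am c0 P Q k*v^2/(2*k) + Q*A3 Q k*v^6/(6*k).

Lemma term1 c0 cT P Q k T : 0 < k -> 0 < T ->
  mu_int T (rep2 c0 cT P Q k T) (fun t => mu_int T (rep2 c0 cT P Q k T) (fun s => exp (- k * Rabs (t - s)))) =
  c0 * gform c0 cT P Q k (exp (k*T)) 1 + cT * gform c0 cT P Q k (exp (k*T)) (exp (k*T))
  + (F1 c0 cT P Q k (exp (k*T)) T (exp (k*T)) - F1 c0 cT P Q k (exp (k*T)) 0 1).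
Proof.
  intros Hk HT. rewrite mu_int_rep2. cbv beta.
  rewrite (inner1 c0 cT P Q k T 0), (inner1 c0 cT P Q k T T) by lra.
  rewrite Rmult_0_r, exp_0. f_equal.
  apply is_RInt_unique.
  pose proof (exp_pos (k*T)) as Hu.
  apply (RInt_by (fun t => F1 c0 cT P Q k (exp (k*T)) t (exp (k*t)))
                 (fun t => densf P Q k t * gform c0 cT P Q k (exp (k*T)) (exp (k*t)))); try lra.
  - intros s _. pose proof (exp_pos (k*s)). unfold F1. auto_derive; [nz|].
    unfold densf, gform, A0, A1, Am, A3. req. field. nz.
  - intros s _. pose proof (exp_pos (k*s)). unfold densf, gform. apply cont_of_der; auto_derive; nz.
  - intros s Hs. rewrite inner1 by lra. reflexivity.
  - rewrite Rmult_0_r, exp_0. reflexivity.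
Qed.

Definition hform cY0 P Q k v := cY0/v + (P*(v-1)/k + Q*(v^4-1)/(4*k))/v.

Lemma inner2 cY0 cYT P Q k T t : 0 < k -> 0 < t <= T ->
  mu_int_lt (rep2 cY0 cYT P Q k T) t (fun s => exp (- k * (t - s))) = hform cY0 P Q k (exp (k*t)).
Proof.
  intros Hk Ht. unfold mu_int_lt, rep2; simpl.
  destruct (Rlt_dec 0 t); [|lra]. destruct (Rlt_dec T t); [lra|].
  pose proof (exp_pos (k*t)) as Hv.
  rewrite (is_RInt_unique _ _ _ ((P*exp (k*t)/k + Q*exp (k*t)^4/(4*k))/exp (k*t) - (P*exp (k*0)/k + Q*exp (k*0)^4/(4*k))/exp (k*t))).
  - replace (-k*(t-0)) with (k*0 - k*t) by ring. rewrite exp_sub, Rmult_0_r, exp_0.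
    unfold hform. field. lra.
  - apply (RInt_by (fun s => (P*exp (k*s)/k + Q*exp (k*s)^4/(4*k))/exp (k*t))
                   (fun s => (P + Q*exp (k*s)^3) * exp (k*s) / exp (k*t))); try lra.
    + intros s _. auto_derive; auto. req. field. lra.
    + cont_tac. nz.
    + intros s Hs. replace (-k*(t-s)) with (k*s - k*t) by ring.
      rewrite exp_sub. unfold densf. field. lra.
Qed.

Lemma inner2_0 cY0 cYT P Q k T : 0 < T ->
  mu_int_lt (rep2 cY0 cYT P Q k T) 0 (fun s => exp (- k * (0 - s))) = 0.
Proof.
  intros HT. unfold mu_int_lt, rep2; simpl.
  destruct (Rlt_dec 0 0); [lra|]. destruct (Rlt_dec T 0); [lra|].
  rewrite RInt_point. unfold zero; simpl. ring.
Qed.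

Definition Bm cY0 P Q k := cY0 - P/k - Q/(4*k).
Definition G2 cY0 P Py Q k t v :=
  P*(Py/k)*t - P*Bm cY0 Py Q k/(k*v) + (P*(Q/(4*k))+Q*(Py/k))*v^3/(3*k)
  + Q*Bm cY0 Py Q k*v^2/(2*k) + Q*(Q/(4*k))*v^6/(6*k).

Lemma term2 c0 cT P Q cY0 cYT Py k T : 0 < k -> 0 < T ->
  mu_int T (rep2 c0 cT P Q k T) (fun t => mu_int_lt (rep2 cY0 cYT Py Q k T) t (fun s => exp (- k * (t - s)))) =
  cT * hform cY0 Py Q k (exp (k*T))
  + (G2 cY0 P Py Q k T (exp (k*T)) - G2 cY0 P Py Q k 0 1).
Proof.
  intros Hk HT. rewrite mu_int_rep2. cbv beta.
  rewrite inner2_0, (inner2 cY0 cYT Py Q k T T) by lra.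
  rewrite Rmult_0_r, Rplus_0_l. f_equal.
  apply is_RInt_unique.
  pose proof (exp_pos (k*T)) as Hu.
  apply (RInt_by (fun t => G2 cY0 P Py Q k t (exp (k*t)))
                 (fun t => densf P Q k t * hform cY0 Py Q k (exp (k*t)))); try lra.
  - intros s _. pose proof (exp_pos (k*s)). unfold G2. auto_derive; [nz|].
    unfold densf, hform, Bm. req. field. nz.
  - intros s _. pose proof (exp_pos (k*s)). unfold densf, hform. apply cont_of_der; auto_derive; nz.
  - intros s Hs. rewrite inner2 by lra. reflexivity.
  - rewrite Rmult_0_r, exp_0. reflexivity.
Qed.

Lemma cost_canon rho th T c0 cT P Q cY0 cYT Py : 0 < rho -> 0 < T ->
  cost rho th T (rep2 c0 cT P Q rho T) (rep2 cY0 cYT Py Q rho T) =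
  1/2 * (c0 * gform c0 cT P Q rho (exp (rho*T)) 1 + cT * gform c0 cT P Q rho (exp (rho*T)) (exp (rho*T))
  + (F1 c0 cT P Q rho (exp (rho*T)) T (exp (rho*T)) - F1 c0 cT P Q rho (exp (rho*T)) 0 1))
  + (cT * hform cY0 Py Q rho (exp (rho*T))
  + (G2 cY0 P Py Q rho T (exp (rho*T)) - G2 cY0 P Py Q rho 0 1))
  + 1/2 * (c0 * cY0 + cT * cYT) + th * (c0^2 + cT^2).
Proof.
  intros Hk HT. unfold cost. rewrite term1, term2 by auto.
  unfold jump_at, rep2; simpl.
  destruct (Req_EM_T 0 0); [|congruence]. destruct (Req_EM_T T 0); [lra|].
  destruct (Req_EM_T 0 T); [lra|]. destruct (Req_EM_T T T); [|congruence].
  ring.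
Qed.

Definition Dn rho T := 2 * exp (3*rho*T) * (3*rho*T + 5) - 1.
Definition V0 rho T := (exp (3*rho*T) * (6*rho*T + 4) - 4) / Dn rho T.
Definition Qf rho T a := -12*rho*a / Dn rho T.
Definition Pf rho T a b := -6*rho*a*exp (3*rho*T) / Dn rho T - rho*b/(rho*T+1).

Lemma Dn_pos rho T : 0 < rho -> 0 < T -> 0 < Dn rho T.
Proof.
  intros. unfold Dn. assert (1 < exp (3*rho*T)).
  { rewrite <- exp_0. apply exp_increasing. assert (0 < rho*T) by (apply Rmult_lt_0_compat; auto). lra. }
  assert (0 < rho*T) by (apply Rmult_lt_0_compat; auto). nra.
Qed.

Lemma canon_rep rho T a b X X0m : 0 < rho -> 0 < T ->
  (forall t, X t = a * Vf rho T t + b * Wf rho T t) -> X0m = a * V0m + b * W0m ->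
  is_rep T X0m X (rep2 (a*(V0 rho T - 1)) (-b/(rho*T+1)) (Pf rho T a b) (Qf rho T a) rho T).
Proof.
  intros Hk HT HX HX0. pose proof (Dn_pos rho T Hk HT) as HD.
  assert (HN : 0 < rho*T+1) by (assert (0 < rho*T) by (apply Rmult_lt_0_compat; auto); lra).
  unfold rep2; split; [|split; [|split]]; simpl.
  - constructor; [simpl; intros [H|[]]; lra|]. constructor; [simpl; tauto|constructor].
  - intros p [<-|[<-|[]]]; simpl; lra.
  - intros t _. unfold densf. apply cont_of_der. auto_derive. auto.
  - intros t Ht.
    rewrite (is_RInt_unique _ _ _ (Pf rho T a b * t + Qf rho T a * exp (rho*t)^3/(3*rho)
              - (Pf rho T a b * 0 + Qf rho T a * exp (rho*0)^3/(3*rho)))).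
    2:{ apply (RInt_by (fun s => Pf rho T a b * s + Qf rho T a * exp (rho*s)^3/(3*rho))
                   (densf (Pf rho T a b) (Qf rho T a) rho)); try lra.
        - intros s _. auto_derive; auto. unfold densf. req. field. lra.
        - unfold densf. cont_tac.
        - intros; reflexivity. }
    rewrite !Rmult_0_r, exp_0, HX, HX0. unfold Vf, Wf, V0m, W0m, V0, Pf, Qf.
    rewrite !exp3. fold (Dn rho T). unfold Dn. rewrite !exp3.
    destruct (Rle_dec t T); [|lra]. destruct (Rle_dec 0 t); [|lra].
    destruct (Rlt_dec t T).
    + destruct (Rle_dec T t); [lra|]. unfold Dn in HD. rewrite exp3 in HD. field. repeat split; lra.
    + assert (t = T) by lra. subst t. destruct (Rle_dec T T); [|lra].
      unfold Dn in HD. rewrite exp3 in HD. field. repeat split; lra.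
Qed.

Lemma exp6 r t : exp (6*r*t) = exp (r*t) ^ 6.
Proof. replace (6*r*t) with (3*r*t + 3*r*t) by ring. rewrite exp_plus, exp3. ring. Qed.

Theorem corollary4p6 (rho T x y : R) :
  0 < rho -> 0 < T ->
  let X := fun t => 1/2 * (x + y) * Vf rho T t + 1/2 * (x - y) * Wf rho T t in
  let Y := fun t => 1/2 * (x + y) * Vf rho T t - 1/2 * (x - y) * Wf rho T t in
  let X0m := 1/2 * (x + y) * V0m + 1/2 * (x - y) * W0m in
  let Y0m := 1/2 * (x + y) * V0m - 1/2 * (x - y) * W0m in
  (exists rX, is_rep T X0m X rX) /\ (exists rY, is_rep T Y0m Y rY) /\
  forall rX rY, is_rep T X0m X rX -> is_rep T Y0m Y rY ->
    cost rho (1/4) T rX rY =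
      (x + y)^2 * (36 * exp (6*rho*T) * (8*rho*T + 13) - 60 * exp (3*rho*T) - 3)
        / (16 * (2 * exp (3*rho*T) * (3*rho*T + 5) - 1)^2)
      + (x^2 - y^2) / (2 * (rho*T + 1))
      + (x - y)^2 / (16 * (rho*T + 1)^2).
Proof.
  intros Hk HT X Y X0m Y0m.
  assert (HrX := canon_rep rho T (1/2*(x+y)) (1/2*(x-y)) X X0m Hk HT (fun t => eq_refl) eq_refl).
  assert (HrY := canon_rep rho T (1/2*(x+y)) (-(1/2*(x-y))) Y Y0m Hk HT
                   ltac:(intro t; unfold Y; ring) ltac:(unfold Y0m; ring)).
  split; [eexists; exact HrX|]. split; [eexists; exact HrY|].
  intros rX rY HX HY.
  rewrite (cost_congr rho (1/4) T X0m X Y0m Y rX _ rY _ HT HX HrX HY HrY).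
  rewrite cost_canon by auto.
  pose proof (Dn_pos rho T Hk HT) as HD.
  assert (HN : 0 < rho*T+1) by (assert (0 < rho*T) by (apply Rmult_lt_0_compat; auto); lra).
  pose proof (exp_pos (rho*T)) as Hu.
  unfold gform, F1, G2, hform, Bm, A0, A1, Am, A3, V0, Pf, Qf.
  unfold Dn in *. rewrite !exp3 in *. rewrite exp6.
  set (u := exp (rho*T)) in *.
  field. repeat split; lra.
Qed.
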